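(* Consider the semi-discretization of the 3-D compressible Euler equations on a conforming hexahedral mesh described in the context. Assume the diagonal metric matrices satisfy, for every element $\kappa$ and every time $\tau$, $$\frac{\mathrm{d}}{\mathrm{d}\tau}\bigl(\mathsf{J}_\kappa\mathbf{1}\bigr)+\sum_{l=1}^{3}\mathsf{D}_{\xi_l}\mathsf{B}_{l,\kappa}\mathbf{1}=\mathbf{0},\qquad \sum_{l=1}^{3}\mathsf{D}_{\xi_l}\mathsf{A}_{lm,\kappa}\mathbf{1}=\mathbf{0},\quad m=1,2,3 .$$ Then the scheme is freestream preserving. That is, let $u_c\in\mathbb{R}^5$ be an admissible constant state ($\rho>0$, $T>0$). If at some time every row of $q_\kappa$ and every row of the neighbouring states $q_{\kappa_{2l-1}},q_{\kappa_{2l}}$ ($l=1,2,3$) entering the interface terms equals $u_c^T$, then $\frac{\mathrm d q_\kappa}{\mathrm d\tau}=0$ at that time.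
   Context: **Gas model.** Ideal gas with gas constant $R>0$ and $\gamma>1$. Set $c_p=\gamma R/(\gamma-1)$ and $c_v=R/(\gamma-1)$. Conservative variables are $u=(\rho,\rho V_1,\rho V_2,\rho V_3,\rho E)^T$, where $E=c_vT+\tfrac12|V|^2$. Pressure is $p=\rho RT$ and specific enthalpy is $h=c_pT$. Inviscid fluxes are $F_m(u)=(\rho V_m,\rho V_mV_1+\delta_{m1}p,\rho V_mV_2+\delta_{m2}p,\rho V_mV_3+\delta_{m3}p,\rho V_m(E+p/\rho))^T$. Thermodynamic entropy is $s=\frac{R}{\gamma-1}\log(T/T_\infty)-R\log(\rho/\rho_\infty)$. Mathematical entropy is $\mathcal S=-\rho s$, with entropy flux $\mathcal F_{x_m}=-\rho sV_m$. Entropy variables are $w(u)=(\partial\mathcal S/\partial u)^T$. Potentials are $\varphi=w^Tu-\mathcal S$ and $\psi_m=w^TF_m-\mathcal F_{x_m}$. **Two-point fluxes.** $U^{sc}(u,v),F^{sc}_m(u,v)\in\mathbb{R}^5$ satisfy: - symmetry in $(u,v)$; - consistency: $U^{sc}(u,u)=u$, $F^{sc}_m(u,u)=F_m(u)$; - shuffle conditions: $(w(u)-w(v))^TU^{sc}(u,v)=\varphi(u)-\varphi(v)$ and $(w(u)-w(v))^TF^{sc}_m(u,v)=\psi_m(u)-\psi_m(v)$. **1-D SBP operators (spectral collocation).** For $l=1,2,3$, take $N_l$ nodes $\alpha_l=\xi_{l,1}<\dots<\xi_{l,N_l}=\beta_l$. Let $H_l$ be diagonal positive definite and $Q_l+Q_l^T=E_l:=e_{N_l}e_{N_l}^T-e_1e_1^T$.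 Set $D_l=H_l^{-1}Q_l$, with $D_l\mathbf 1=\mathbf 0$. **Tensor-product operators.** Each element has $N=N_1N_2N_3$ nodes. Define $\mathsf M=H_1\otimes H_2\otimes H_3$. For $l=1$: - $\mathsf D_{\xi_1}=D_1\otimes I\otimes I$ and $\mathsf E_{\xi_1}=E_1\otimes H_2\otimes H_3$; - $\mathsf R_{\xi_1,\alpha}=e_1^T\otimes I\otimes I$ and $\mathsf R_{\xi_1,\beta}=e_{N_1}^T\otimes I\otimes I$; - $\mathsf P_{\xi_1}=H_2\otimes H_3$. The operators for $l=2,3$ are analogous, with the 1-D factor in position $l$. $\circ$ is the Hadamard product, and $(\mathsf X\circ \mathsf Y)\mathbf 1$ means the Hadamard product is formed first. **Mesh and metrics.** Elements are conforming hexahedra, each the image of a reference cube under a smooth, invertible, time-dependent map. Element $\kappa$ carries: - nodal states $q_\kappa(\tau)\in\mathbb{R}^{N\times 5}$, where row $a$ is the state at node $a$; - diagonal matrices $\mathsf J_\kappa$ (positive entries, approximating $J$), $\mathsf B_{l,\kappa}$ (approximating $J\partial\xi_l/\partial t$) and $\mathsf A_{lm,\kappa}$ (approximating $J\partial\xi_l/\partial x_m$) at the nodes. $\kappa_{2l-1}$ and $\kappa_{2l}$ denote the neighbours (or boundary data states) across the faces $\xi_l=\alpha_l$ and $\xi_l=\beta_l$, respectively. **Flux matrices.** For $i=1,\dots,5$, let $\mathsf U^{sc,i}(q_\kappa,q_r)\in\mathbb{R}^{N\times N}$ have $(a,b)$ entry equal to the $i$-th component of $U^{sc}(q_\kappa(a,:),q_r(b,:))$.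 Define $\mathsf F^{sc,i}_m$ analogously. **Scheme.** For every element $\kappa$ and $i=1,\dots,5$: $$\tfrac{\mathrm d}{\mathrm d\tau}(\mathsf J_\kappa q_\kappa(:,i))+\sum_{l}\bigl[(\mathsf D_{\xi_l}\mathsf B_{l,\kappa}+\mathsf B_{l,\kappa}\mathsf D_{\xi_l})\circ\mathsf U^{sc,i}(q_\kappa,q_\kappa)\bigr]\mathbf 1+\sum_{l,m}\bigl[(\mathsf D_{\xi_l}\mathsf A_{lm,\kappa}+\mathsf A_{lm,\kappa}\mathsf D_{\xi_l})\circ\mathsf F^{sc,i}_m(q_\kappa,q_\kappa)\bigr]\mathbf 1 = \mathsf M^{-1}\sum_l\Bigl[(\mathsf E_{\xi_l}\mathsf B_{l,\kappa})\circ\mathsf U^{sc,i}(q_\kappa,q_\kappa)\mathbf 1+(\mathsf B_{l,\kappa}\mathsf R_{\xi_l,\alpha}^T\mathsf P_{\xi_l}\mathsf R_{\xi_l,\beta})\circ\mathsf U^{sc,i}(q_\kappa,q_{\kappa_{2l-1}})\mathbf 1-(\mathsf B_{l,\kappa}\mathsf R_{\xi_l,\beta}^T\mathsf P_{\xi_l}\mathsf R_{\xi_l,\alpha})\circ\mathsf U^{sc,i}(q_\kappa,q_{\kappa_{2l}})\mathbf 1\Bigr] + \mathsf M^{-1}\sum_{l,m}\Bigl[(\mathsf E_{\xi_l}\mathsf A_{lm,\kappa})\circ\mathsf F^{sc,i}_m(q_\kappa,q_\kappa)\mathbf 1+(\mathsf A_{lm,\kappa}\mathsf R_{\xi_l,\alpha}^T\mathsf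 P_{\xi_l}\mathsf R_{\xi_l,\beta})\circ\mathsf F^{sc,i}_m(q_\kappa,q_{\kappa_{2l-1}})\mathbf 1-(\mathsf A_{lm,\kappa}\mathsf R_{\xi_l,\beta}^T\mathsf P_{\xi_l}\mathsf R_{\xi_l,\alpha})\circ\mathsf F^{sc,i}_m(q_\kappa,q_{\kappa_{2l}})\mathbf 1\Bigr].$$ *)

(* Defs.v *)
From HB Require Import structures.
From mathcomp Require Import all_boot all_order all_algebra.
From mathcomp Require Import mxtens.
From mathcomp Require Import all_classical all_reals all_analysis.

Set Implicit Arguments.
Unset Strict Implicit.
Unset Printing Implicit Defensive.

Import Order.TTheory GRing.Theory Num.Theory.
Local Open Scope ring_scope.

(* Gas model, entropy, fluxes.  A state u = (rho, rho V1, rho V2, rho V3,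
   rho E) is a row vector 'rV_5 (indices 0..4).                       *)
Section Gas.
Variables (R : realType) (Rg gam Tinf rhoinf : R).

Definition cp : R := gam * Rg / (gam - 1).
Definition cv : R := Rg / (gam - 1).

Definition rho (u : 'rV[R]_5) : R := u ord0 ord0.
(* velocity component V_{k+1}, k = 0,1,2 *)
Definition vel (u : 'rV[R]_5) (k : nat) : R := u ord0 (inord k.+1) / rho u.
Definition Etot (u : 'rV[R]_5) : R := u ord0 (inord 4) / rho u.
Definition speed2 (u : 'rV[R]_5) : R := \sum_(k < 3) vel u k ^+ 2.
(* E = c_v T + |V|^2/2 *)
Definition Temp (u : 'rV[R]_5) : R := (Etot u - speed2 u / 2) / cv.
Definition pres (u : 'rV[R]_5) : R := rho u * Rg * Temp u.
Definition enth (u : 'rV[R]_5) : R := cp * Temp u.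

Definition admissible (u : 'rV[R]_5) : Prop := 0 < rho u /\ 0 < Temp u.

(* inviscid flux F_m, m = 0,1,2 standing for x_1, x_2, x_3 *)
Definition Flux (m : 'I_3) (u : 'rV[R]_5) : 'rV[R]_5 :=
  \row_(i < 5)
    (if (i : nat) == 0%N then rho u * vel u m
     else if (i : nat) == 4%N then rho u * vel u m * (Etot u + pres u / rho u)
     else rho u * vel u m * vel u i.-1 + (if (m : nat) == i.-1 then pres u else 0)).

Definition sthermo (u : 'rV[R]_5) : R :=
  Rg / (gam - 1) * ln (Temp u / Tinf) - Rg * ln (rho u / rhoinf).
Definition Sent (u : 'rV[R]_5) : R := - (rho u * sthermo u).
Definition Fent (m : 'I_3) (u : 'rV[R]_5) : R := - (rho u * sthermo u * vel u m).

Definition wvar (u : 'rV[R]_5) : 'rV[R]_5 :=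
  \row_(i < 5) ('D_(delta_mx ord0 i) Sent u : R).

Definition dot5 (a b : 'rV[R]_5) : R := \sum_(i < 5) a ord0 i * b ord0 i.

Definition phi_pot (u : 'rV[R]_5) : R := dot5 (wvar u) u - Sent u.
Definition psi_pot (m : 'I_3) (u : 'rV[R]_5) : R :=
  dot5 (wvar u) (Flux m u) - Fent m u.

(* Two-point fluxes: symmetry, consistency, shuffle conditions
   (imposed on admissible states, where the entropy is defined). *)
Definition two_point_fluxes (Usc : 'rV[R]_5 -> 'rV[R]_5 -> 'rV[R]_5)
  (Fsc : 'I_3 -> 'rV[R]_5 -> 'rV[R]_5 -> 'rV[R]_5) : Prop :=
  [/\ (forall u v, admissible u -> admissible v ->
         Usc u v = Usc v u /\ forall m, Fsc m u v = Fsc m v u),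
      (forall u, admissible u ->
         Usc u u = u /\ forall m, Fsc m u u = Flux m u) &
      (forall u v, admissible u -> admissible v ->
         dot5 (wvar u - wvar v) (Usc u v) = phi_pot u - phi_pot v /\
         forall m, dot5 (wvar u - wvar v) (Fsc m u v) = psi_pot m u - psi_pot m v)].

End Gas.

Section SBP.
Variable R : realType.

Definition Ebnd (n : nat) : 'M[R]_n.+1 :=
  delta_mx ord_max ord_max - delta_mx ord0 ord0.

Definition nodes1 (n : nat) (alpha beta : R) (xi : 'rV[R]_n.+1) : Prop :=
  [/\ alpha < beta, xi ord0 ord0 = alpha, xi ord0 ord_max = beta &
      forall i j : 'I_n.+1, (i < j)%N -> xi ord0 i < xi ord0 j].

Definition sbp1 (n : nat) (H Q D : 'M[R]_n.+1) : Prop :=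
  [/\ is_diag_mx H, (forall i, 0 < H i i),
      Q + Q^T = Ebnd n,
      D = invmx H *m Q &
      D *m (const_mx 1 : 'cV[R]_n.+1) = 0].

End SBP.

(* Tensor-product operators on an element with N = N1 N2 N3 nodes,
   N_l = n_l.+1; the node ordering is the Kronecker one of [tensmx].  *)
Section Tensor.
Variables (R : realType) (n1 n2 n3 : nat).
Variables (H1 D1 : 'M[R]_n1.+1) (H2 D2 : 'M[R]_n2.+1) (H3 D3 : 'M[R]_n3.+1).

Local Notation N := ((n1.+1 * n2.+1) * n3.+1)%N.

Definition Mmass : 'M[R]_N := H1 *t H2 *t H3.

Definition Dxi (l : 'I_3) : 'M[R]_N :=
  if (l : nat) == 0%N then D1 *t 1%:M *t 1%:M
  else if (l : nat) == 1%N then 1%:M *t D2 *t 1%:M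
  else 1%:M *t 1%:M *t D3.

Definition Exi (l : 'I_3) : 'M[R]_N :=
  if (l : nat) == 0%N then Ebnd R n1 *t H2 *t H3
  else if (l : nat) == 1%N then H1 *t Ebnd R n2 *t H3
  else H1 *t H2 *t Ebnd R n3.

Definition eA (n : nat) : 'M[R]_(1, n.+1) := delta_mx ord0 ord0.
Definition eB (n : nat) : 'M[R]_(1, n.+1) := delta_mx ord0 ord_max.

Definition R1 (e : forall n, 'M[R]_(1, n.+1)) : 'M[R]_((1 * n2.+1) * n3.+1, N) :=
  e n1 *t 1%:M *t 1%:M.
Definition R2 (e : forall n, 'M[R]_(1, n.+1)) : 'M[R]_((n1.+1 * 1) * n3.+1, N) :=
  1%:M *t e n2 *t 1%:M.
Definition R3 (e : forall n, 'M[R]_(1, n.+1)) : 'M[R]_((n1.+1 * n2.+1) * 1, N) :=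
  1%:M *t 1%:M *t e n3.

Lemma face1_eq : (n2.+1 * n3.+1 = (1 * n2.+1) * n3.+1)%N.
Proof. by rewrite mul1n. Qed.
Lemma face2_eq : (n1.+1 * n3.+1 = (n1.+1 * 1) * n3.+1)%N.
Proof. by rewrite muln1. Qed.
Lemma face3_eq : (n1.+1 * n2.+1 = (n1.+1 * n2.+1) * 1)%N.
Proof. by rewrite muln1. Qed.

Definition P1 : 'M[R]_((1 * n2.+1) * n3.+1) := castmx (face1_eq, face1_eq) (H2 *t H3).
Definition P2 : 'M[R]_((n1.+1 * 1) * n3.+1) := castmx (face2_eq, face2_eq) (H1 *t H3).
Definition P3 : 'M[R]_((n1.+1 * n2.+1) * 1) := castmx (face3_eq, face3_eq) (H1 *t H2).

Definition RaPRb (l : 'I_3) : 'M[R]_N :=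
  if (l : nat) == 0%N then (R1 eA)^T *m P1 *m R1 eB
  else if (l : nat) == 1%N then (R2 eA)^T *m P2 *m R2 eB
  else (R3 eA)^T *m P3 *m R3 eB.

Definition RbPRa (l : 'I_3) : 'M[R]_N :=
  if (l : nat) == 0%N then (R1 eB)^T *m P1 *m R1 eA
  else if (l : nat) == 1%N then (R2 eB)^T *m P2 *m R2 eA
  else (R3 eB)^T *m P3 *m R3 eA.

End Tensor.

Section Helpers.
Variable R : realType.

Definition hmx (m n : nat) (X Y : 'M[R]_(m, n)) : 'M[R]_(m, n) :=
  \matrix_(a, b) (X a b * Y a b).

Definition ones (n : nat) : 'cV[R]_n := const_mx 1.

Definition ddt (m n : nat) (f : R -> 'M[R]_(m, n)) (t : R) : 'M[R]_(m, n) :=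
  \matrix_(a, b) derive1 (fun s => f s a b) t.

Definition tdiff (m n : nat) (f : R -> 'M[R]_(m, n)) : Prop :=
  forall t a b, derivable (fun s => f s a b) t 1.

Definition fluxmx (N : nat) (Fl : 'rV[R]_5 -> 'rV[R]_5 -> 'rV[R]_5)
  (i : 'I_5) (q r : 'M[R]_(N, 5)) : 'M[R]_N :=
  \matrix_(a, b) Fl (row a q) (row b r) ord0 i.

End Helpers.

(* Main.v *)
Require Import Defs.
From HB Require Import structures.
From mathcomp Require Import all_boot all_order all_algebra.
From mathcomp Require Import mxtens.
From mathcomp Require Import all_classical all_reals all_analysis.
Import Order.TTheory GRing.Theory Num.Theory.
Local Open Scope ring_scope.

Section H.
Variable R : realType.

Lemma ones_tens (a b : nat) :
  ones R (a * b) = (ones R a *t ones R b).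
Proof. by apply/matrixP => i j; rewrite !mxE mulr1. Qed.

Lemma tensmxDl m n p q (A B : 'M[R]_(m,n)) (C : 'M[R]_(p,q)) :
  (A + B) *t C = A *t C + B *t C.
Proof. by apply/matrixP => i j; rewrite !mxE mulrDl. Qed.

Lemma tensmxNl m n p q (A : 'M[R]_(m,n)) (C : 'M[R]_(p,q)) :
  (- A) *t C = - (A *t C).
Proof. by apply/matrixP => i j; rewrite !mxE mulNr. Qed.

Lemma tensmxDr m n p q (A B : 'M[R]_(m,n)) (C : 'M[R]_(p,q)) :
  C *t (A + B) = C *t A + C *t B.
Proof. by apply/matrixP => i j; rewrite !mxE mulrDr. Qed.

Lemma tensmxNr m n p q (A : 'M[R]_(m,n)) (C : 'M[R]_(p,q)) :
  C *t (- A) = - (C *t A).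
Proof. by apply/matrixP => i j; rewrite !mxE mulrN. Qed.

Lemma is_diag_tens m n (A : 'M[R]_m) (B : 'M[R]_n) :
  is_diag_mx A -> is_diag_mx B -> is_diag_mx (A *t B).
Proof.
move=> /is_diag_mxP dA /is_diag_mxP dB; apply/is_diag_mxP => i j.
case: (mxtens_indexP i) => i1 i2; case: (mxtens_indexP j) => j1 j2 hne.
rewrite tensmxE.
have [e1|n1] := eqVneq (i1 : nat) j1; last by rewrite dA ?mul0r.
have [e2|n2] := eqVneq (i2 : nat) j2; last by rewrite dB ?mulr0.
by move: hne; rewrite /= e1 e2 eqxx.
Qed.

Lemma diag_comm n (A : 'M[R]_n) (d : 'rV[R]_n) :
  is_diag_mx A -> A *m diag_mx d = diag_mx d *m A.
Proof.
move=> /is_diag_mxP dA; rewrite mul_diag_mx mul_mx_diag.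
apply/matrixP => i j; rewrite !mxE.
have [e|ne] := eqVneq (i : nat) j.
  by have -> : i = j := val_inj e; rewrite mulrC.
by rewrite dA // mulr0 mul0r.
Qed.

Lemma hmx_const n (X : 'M[R]_n) c :
  hmx X (const_mx c) *m ones R n = c *: (X *m ones R n).
Proof.
apply/matrixP => i j; rewrite !mxE mulr_sumr; apply: eq_bigr => k _.

by rewrite /hmx /ones !mxE !mulr1 mulrC.

Qed.

Lemma Ebnd_diag n : is_diag_mx (Ebnd R n).
Proof.
apply/is_diag_mxP => i j hne; rewrite /Ebnd !mxE.
have h : forall x, (i == x) && (j == x) = false.
  by move=> x; apply/negP => /andP[/eqP ei /eqP ej]; move: hne; rewrite ei ej eqxx.
by rewrite !h subrr.
Qed.

Lemma castP1 p q (e : (p * q = (1 * p) * q)%N) (A : 'M[R]_p) (B : 'M[R]_q) :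
  castmx (e, e) (A *t B) = (1%:M : 'M[R]_1) *t A *t B.
Proof.
apply/matrixP => i j; rewrite castmxE.
case: (mxtens_indexP i) => i01 i2; case: (mxtens_indexP i01) => i0 i1.
case: (mxtens_indexP j) => j01 j2; case: (mxtens_indexP j01) => j0 j1.
rewrite !tensmxE [i0]ord1 [j0]ord1 [1%:M _ _]mxE eqxx mul1r /=.
have hi : cast_ord (esym e) (mxtens_index (mxtens_index (ord0, i1), i2)) = mxtens_index (i1, i2)
  by apply: val_inj => /=.
have hj : cast_ord (esym e) (mxtens_index (mxtens_index (ord0, j1), j2)) = mxtens_index (j1, j2)
  by apply: val_inj => /=.
by rewrite hi hj tensmxE.
Qed.

Lemma castP2 p q (e : (p * q = (p * 1) * q)%N) (A : 'M[R]_p) (B : 'M[R]_q) :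
  castmx (e, e) (A *t B) = A *t (1%:M : 'M[R]_1) *t B.
Proof.
apply/matrixP => i j; rewrite castmxE.
case: (mxtens_indexP i) => i01 i2; case: (mxtens_indexP i01) => i0 i1.
case: (mxtens_indexP j) => j01 j2; case: (mxtens_indexP j01) => j0 j1.
rewrite !tensmxE [i1]ord1 [j1]ord1 [1%:M _ _]mxE eqxx mulr1 /=.
have hi : cast_ord (esym e) (mxtens_index (mxtens_index (i0, ord0), i2)) = mxtens_index (i0, i2)
  by apply: val_inj => /=; rewrite muln1 addn0.
have hj : cast_ord (esym e) (mxtens_index (mxtens_index (j0, ord0), j2)) = mxtens_index (j0, j2)
  by apply: val_inj => /=; rewrite muln1 addn0.
by rewrite hi hj tensmxE.
Qed.

Lemma castP3 p q (e : (p * q = (p * q) * 1)%N) (A : 'M[R]_p) (B : 'M[R]_q) :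
  castmx (e, e) (A *t B) = A *t B *t (1%:M : 'M[R]_1).
Proof.
apply/matrixP => i j; rewrite castmxE.
case: (mxtens_indexP i) => i01 i2; case: (mxtens_indexP j) => j01 j2.
rewrite tensmxE [i2]ord1 [j2]ord1 [1%:M _ _]mxE eqxx mulr1 /=.
have hi : cast_ord (esym e) (mxtens_index (i01, ord0)) = i01
  by apply: val_inj => /=; rewrite muln1 addn0.
have hj : cast_ord (esym e) (mxtens_index (j01, ord0)) = j01
  by apply: val_inj => /=; rewrite muln1 addn0.
by rewrite hi hj.
Qed.

Lemma delta_ones m n (a : 'I_m) (b : 'I_n) :
  delta_mx a b *m ones R n = delta_mx a 0.
Proof.
apply/matrixP => i j; rewrite !mxE (bigD1 b) //= big1 ?addr0.
  by rewrite !mxE eqxx [j]ord1 eqxx !andbT mulr1.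
by move=> k hk; rewrite !mxE (negbTE hk) andbF mul0r.
Qed.

Lemma bnd1 n :
  Ebnd R n *m ones R n.+1 + (eA R n)^T *m (eB R n *m ones R n.+1)
   - (eB R n)^T *m (eA R n *m ones R n.+1) = 0.
Proof.
rewrite /Ebnd /eA /eB !delta_ones !trmx_delta !mul_delta_mx mulmxBl !delta_ones.
by rewrite subrK subrr.
Qed.

Lemma tens_mul_col m n p q (A : 'M[R]_(m,n)) (B : 'M[R]_(p,q)) (u : 'cV[R]_n) (v : 'cV[R]_q) :
  (A *t B) *m (u *t v : 'cV_(n * q)) = ((A *m u) *t (B *m v) : 'cV_(m * p)).
Proof.
have := tensmx_mul A B u v => /matrixP h.
apply/matrixP => i j; have := h i (mxtens_index (j, j)).
have -> : mxtens_index (j, j) = j :> 'I_1 by rewrite [j]ord1; apply: val_inj.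
done.
Qed.

Lemma tens_mul_ones m n p q (A : 'M[R]_(m,n)) (B : 'M[R]_(p,q)) :
  (A *t B) *m ones R (n * q) = ((A *m ones R n) *t (B *m ones R q) : 'cV_(m * p)).
Proof. by rewrite ones_tens tens_mul_col. Qed.

Lemma lin1 m1 m2 m3 n2 n3 (v w z : 'M[R]_(m1, 1)) (a : 'M[R]_(m2, n2)) (b : 'M[R]_(m3, n3)) :
  (v *t a) *t b + (w *t a) *t b - (z *t a) *t b = ((v + w - z) *t a) *t b.
Proof. by apply/matrixP => i j; rewrite !mxE !mulrBl !mulrDl. Qed.

Lemma lin2 m1 m2 m3 n1 n3 (v w z : 'M[R]_(m2, 1)) (a : 'M[R]_(m1, n1)) (b : 'M[R]_(m3, n3)) :
  (a *t v) *t b + (a *t w) *t b - (a *t z) *t b = ((a *t (v + w - z)) *t b).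
Proof. by apply/matrixP => i j; rewrite !mxE !mulrBr !mulrDr !mulrBl !mulrDl. Qed.

Lemma lin3 m1 m2 m3 n1 n2 (v w z : 'M[R]_(m3, 1)) (a : 'M[R]_(m1, n1)) (b : 'M[R]_(m2, n2)) :
  (a *t b) *t v + (a *t b) *t w - (a *t b) *t z = ((a *t b) *t (v + w - z)).
Proof. by apply/matrixP => i j; rewrite !mxE !mulrBr !mulrDr. Qed.

End H.

Section T.
Variables (R : realType) (n1 n2 n3 : nat).
Variables (H1 D1 : 'M[R]_n1.+1) (H2 D2 : 'M[R]_n2.+1) (H3 D3 : 'M[R]_n3.+1).



Lemma bnd_tens (l : 'I_3) :
  Exi H1 H2 H3 l *m ones R _ + RaPRb H1 H2 H3 l *m ones R _ - RbPRa H1 H2 H3 l *m ones R _ = 0.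
Proof.
case: l => [[|[|[|//]]] hl]; rewrite /Exi /RaPRb /RbPRa /=.
- rewrite /P1 /R1 castP1 !trmx_tens !trmx1 -!mulmxA !tens_mul_ones !tens_mul_col !mul1mx.
  set v := Ebnd R n1 *m _; set w := _ *m (eB R n1 *m _); set z := _ *m (eA R n1 *m _).
  have := @bnd1 R n1; rewrite -/v -/w -/z => /eqP; rewrite subr_eq0 => /eqP <-.
  by apply/matrixP => i j; rewrite !mxE !(mulrDl, mulrDr) subrr.
- rewrite /P2 /R2 castP2 !trmx_tens !trmx1 -!mulmxA !tens_mul_ones !tens_mul_col !mul1mx.
  set v := Ebnd R n2 *m _; set w := _ *m (eB R n2 *m _); set z := _ *m (eA R n2 *m _).
  have := @bnd1 R n2; rewrite -/v -/w -/z => /eqP; rewrite subr_eq0 => /eqP <-.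
  by apply/matrixP => i j; rewrite !mxE !(mulrDl, mulrDr) subrr.
- rewrite /P3 /R3 castP3 !trmx_tens !trmx1 -!mulmxA !tens_mul_ones !tens_mul_col !mul1mx.
  set v := Ebnd R n3 *m _; set w := _ *m (eB R n3 *m _); set z := _ *m (eA R n3 *m _).
  have := @bnd1 R n3; rewrite -/v -/w -/z => /eqP; rewrite subr_eq0 => /eqP <-.
  by apply/matrixP => i j; rewrite !mxE !(mulrDl, mulrDr) subrr.
Qed.

Lemma Exi_diag (l : 'I_3) : is_diag_mx H1 -> is_diag_mx H2 -> is_diag_mx H3 ->
  is_diag_mx (Exi H1 H2 H3 l).
Proof.
move=> d1 d2 d3; rewrite /Exi.
by case: ifP => _; [|case: ifP => _]; rewrite ?is_diag_tens ?Ebnd_diag.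
Qed.

Lemma Dxi_ones (l : 'I_3) :
  D1 *m ones R _ = 0 -> D2 *m ones R _ = 0 -> D3 *m ones R _ = 0 ->
  Dxi D1 D2 D3 l *m ones R _ = 0.
Proof.
move=> h1 h2 h3; rewrite /Dxi.
case: ifP => _; [|case: ifP => _]; rewrite !tens_mul_ones !mul1mx ?h1 ?h2 ?h3;
  by apply/matrixP => i j; rewrite !mxE !(mul0r, mulr0).
Qed.
End T.

Theorem theorem4p6
  (R : realType)
  (* gas model *)
  (Rg gam Tinf rhoinf : R) (hRg : 0 < Rg) (hgam : 1 < gam)
  (hTinf : 0 < Tinf) (hrhoinf : 0 < rhoinf)
  (* two-point fluxes *)
  (Usc : 'rV[R]_5 -> 'rV[R]_5 -> 'rV[R]_5)
  (Fsc : 'I_3 -> 'rV[R]_5 -> 'rV[R]_5 -> 'rV[R]_5)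
  (hflux : two_point_fluxes Rg gam Tinf rhoinf Usc Fsc)
  (* 1-D SBP operators, N_l = n_l.+1 nodes *)
  (n1 n2 n3 : nat) (alpha beta : 'I_3 -> R)
  (xi1 : 'rV[R]_n1.+1) (xi2 : 'rV[R]_n2.+1) (xi3 : 'rV[R]_n3.+1)
  (hxi1 : nodes1 (alpha 0) (beta 0) xi1)
  (hxi2 : nodes1 (alpha 1) (beta 1) xi2)
  (hxi3 : nodes1 (alpha 2%:R) (beta 2%:R) xi3)
  (H1 Q1 D1 : 'M[R]_n1.+1) (H2 Q2 D2 : 'M[R]_n2.+1) (H3 Q3 D3 : 'M[R]_n3.+1)
  (hsbp1 : sbp1 H1 Q1 D1) (hsbp2 : sbp1 H2 Q2 D2) (hsbp3 : sbp1 H3 Q3 D3)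
  (* mesh: elements, nodal states, neighbour / boundary states, metrics *)
  (K : Type)
  (q : K -> R -> 'M[R]_((n1.+1 * n2.+1) * n3.+1, 5))
  (qa qb : K -> 'I_3 -> R -> 'M[R]_((n1.+1 * n2.+1) * n3.+1, 5))
  (jv : K -> R -> 'rV[R]_((n1.+1 * n2.+1) * n3.+1))
  (bv : K -> R -> 'I_3 -> 'rV[R]_((n1.+1 * n2.+1) * n3.+1))
  (av : K -> R -> 'I_3 -> 'I_3 -> 'rV[R]_((n1.+1 * n2.+1) * n3.+1))
  (hJpos : forall k t a, 0 < jv k t ord0 a)
  (hqdiff : forall k, tdiff (q k))
  (hJdiff : forall k, tdiff (jv k))
  (* the semi-discrete scheme, for every element, time and component *)
  (hscheme : forall k t (i : 'I_5),
     ddt (fun s => diag_mx (jv k s) *m col i (q k s)) t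
     + \sum_(l < 3)
         hmx (Dxi D1 D2 D3 l *m diag_mx (bv k t l) + diag_mx (bv k t l) *m Dxi D1 D2 D3 l)
             (fluxmx Usc i (q k t) (q k t)) *m ones R _
     + \sum_(l < 3) \sum_(m < 3)
         hmx (Dxi D1 D2 D3 l *m diag_mx (av k t l m) + diag_mx (av k t l m) *m Dxi D1 D2 D3 l)
             (fluxmx (Fsc m) i (q k t) (q k t)) *m ones R _
     = invmx (Mmass H1 H2 H3) *m
         (\sum_(l < 3)
            (hmx (Exi H1 H2 H3 l *m diag_mx (bv k t l)) (fluxmx Usc i (q k t) (q k t)) *m ones R _
             + hmx (diag_mx (bv k t l) *m RaPRb H1 H2 H3 l) (fluxmx Usc i (q k t) (qa k l t)) *m ones R _
             - hmx (diag_mx (bv k t l) *m RbPRa H1 H2 H3 l) (fluxmx Usc i (q k t) (qb k l t)) *m ones R _))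
     + invmx (Mmass H1 H2 H3) *m
         (\sum_(l < 3) \sum_(m < 3)
            (hmx (Exi H1 H2 H3 l *m diag_mx (av k t l m)) (fluxmx (Fsc m) i (q k t) (q k t)) *m ones R _
             + hmx (diag_mx (av k t l m) *m RaPRb H1 H2 H3 l) (fluxmx (Fsc m) i (q k t) (qa k l t)) *m ones R _
             - hmx (diag_mx (av k t l m) *m RbPRa H1 H2 H3 l) (fluxmx (Fsc m) i (q k t) (qb k l t)) *m ones R _)))
  (* discrete metric identities (GCL) *)
  (hgcl_t : forall k t,
     ddt (fun s => diag_mx (jv k s) *m ones R _) t
     + \sum_(l < 3) Dxi D1 D2 D3 l *m diag_mx (bv k t l) *m ones R _ = 0)
  (hgcl_x : forall k t (m : 'I_3),
     \sum_(l < 3) Dxi D1 D2 D3 l *m diag_mx (av k t l m) *m ones R _ = 0) :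
  (* freestream preservation *)
  forall (k : K) (t0 : R) (uc : 'rV[R]_5),
    admissible Rg gam uc ->
    (forall a, row a (q k t0) = uc) ->
    (forall (l : 'I_3) a, row a (qa k l t0) = uc /\ row a (qb k l t0) = uc) ->
    ddt (q k) t0 = 0.
Proof.
move=> k t0 uc hadm hq hqab.
case: hflux => _ hcons _.
have hUc : Usc uc uc = uc := (hcons uc hadm).1.
case: hsbp1 => dH1 _ _ _ hD1; case: hsbp2 => dH2 _ _ _ hD2; case: hsbp3 => dH3 _ _ _ hD3.
have fU : forall i r, (forall b, row b r = uc) ->
    fluxmx Usc i (q k t0) r = const_mx (uc ord0 i).
  by move=> i r hr; apply/matrixP => a b; rewrite !mxE hq hr hUc.
have fF : forall m i r, (forall b, row b r = uc) ->
    fluxmx (Fsc m) i (q k t0) r = const_mx (Fsc m uc uc ord0 i).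
  by move=> m i r hr; apply/matrixP => a b; rewrite !mxE hq hr.
have hqa : forall l b, row b (qa k l t0) = uc by move=> l b; case: (hqab l b).
have hqb : forall l b, row b (qb k l t0) = uc by move=> l b; case: (hqab l b).
have bnd : forall l d c,
   hmx (Exi H1 H2 H3 l *m diag_mx d) (const_mx c) *m ones R _
   + hmx (diag_mx d *m RaPRb H1 H2 H3 l) (const_mx c) *m ones R _
   - hmx (diag_mx d *m RbPRa H1 H2 H3 l) (const_mx c) *m ones R _ = 0.
  move=> l d c; rewrite !hmx_const -scalerDr -scalerBr.
  rewrite diag_comm ?Exi_diag // -!mulmxA -mulmxDr -mulmxBr bnd_tens.
  by rewrite mulmx0 scaler0.
have vol : forall (d : 'rV[R]_((n1.+1 * n2.+1) * n3.+1)) l c,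
   hmx (Dxi D1 D2 D3 l *m diag_mx d + diag_mx d *m Dxi D1 D2 D3 l) (const_mx c) *m ones R _
   = c *: (Dxi D1 D2 D3 l *m diag_mx d *m ones R _).
  move=> d l c; rewrite hmx_const mulmxDl -[diag_mx d *m _ *m _]mulmxA Dxi_ones //.
  by rewrite mulmx0 addr0.
have key : forall i,
  ddt (fun s => diag_mx (jv k s) *m col i (q k s)) t0 =
  uc ord0 i *: ddt (fun s => diag_mx (jv k s) *m ones R _) t0.
  move=> i; have H := hscheme k t0 i.
  rewrite (eq_bigr (fun l => uc ord0 i *: (Dxi D1 D2 D3 l *m diag_mx (bv k t0 l) *m ones R _))) in H;
    last by move=> l _; rewrite (fU _ _ hq) vol.
  rewrite [X in _ + X = _]exchange_big /= in H.
  rewrite [X in _ + X = _]big1 in H; last first.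
    move=> m _; under eq_bigr => l _ do rewrite (fF _ _ _ hq) vol.
    by rewrite -scaler_sumr hgcl_x scaler0.
  rewrite [X in _ = invmx _ *m X + _]big1 in H; last first.
    by move=> l _; rewrite (fU _ _ hq) (fU _ _ (hqa l)) (fU _ _ (hqb l)) bnd.
  rewrite [X in _ = _ + invmx _ *m X]big1 in H; last first.
    move=> l _; apply: big1 => m _.
    by rewrite (fF _ _ _ hq) (fF _ _ _ (hqa l)) (fF _ _ _ (hqb l)) bnd.
  rewrite !mulmx0 !addr0 -scaler_sumr in H.
  move: H.
  have := hgcl_t k t0; move: (\sum_(l < 3) _) => S hg H.
  have hS : S = - ddt (fun s => diag_mx (jv k s) *m ones R _) t0.
    by apply/eqP; rewrite -addr_eq0 addrC hg.
  move: H; rewrite hS scalerN => /eqP; rewrite addr_eq0 opprK => /eqP //.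

apply/matrixP => a i; rewrite !mxE.
have := congr1 (fun M : 'M[R]_((n1.+1 * n2.+1) * n3.+1, 1) => M a ord0) (key i); rewrite !mxE.
have e1 : (fun s => (diag_mx (jv k s) *m col i (q k s)) a ord0)
        = ((fun s => jv k s ord0 a) * (fun s => q k s a i))%R.
  by apply/funext => s; rewrite mul_diag_mx !mxE.
have e2 : (fun s => (diag_mx (jv k s) *m ones R _) a ord0) = (fun s => jv k s ord0 a).
  by apply/funext => s; rewrite mul_diag_mx !mxE mulr1.
rewrite e1 e2 !derive1E deriveM; [|exact: hJdiff|exact: hqdiff].
have -> : q k t0 a i = uc ord0 i.
  by have := congr1 (fun r : 'rV[R]_5 => r ord0 i) (hq a); rewrite mxE.
move=> /eqP; rewrite -subr_eq0 addrK.
rewrite scaler_eq0 gt_eqF ?hJpos //=.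
by move/eqP.
Qed.
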